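(* Let $\mathrm{A}$ be any nontrivial system of Bilocal Classical Theory (BCT), and let $\rho=\sum_{i=1}^{D_{\mathrm A}}p_i|i)_{\mathrm A}$ be a deterministic state of $\mathrm A$, where $|1)_{\mathrm A},\dots,|D_{\mathrm A})_{\mathrm A}$ are the pure states of $\mathrm A$ and $\mathbf p=(p_i)_i$ is a probability distribution. Then the information content of $\rho$ is \[ I(\rho)=\frac{H(\mathbf p)+1}{2}, \] where $H(\mathbf p)=-\sum_i p_i\log_2 p_i$ is the Shannon entropy.
   Context: BCT is an operational probabilistic theory with the following structure. Systems: a trivial system $\mathrm I$ (with $\mathrm{AI}=\mathrm{IA}=\mathrm A$) and, for every integer $D>1$, exactly one system of size $D$ (the size $D_{\mathrm A}$ is the dimension of the real span of the states of $\mathrm A$). For a nontrivial system $\mathrm A$, every state is a nonnegative combination $\sum_i p_i|i)_{\mathrm A}$ of the $D_{\mathrm A}$ pure states $|i)_{\mathrm A}$, which are the vertices of the simplex of deterministic states (deterministic iff $\sum_i p_i=1$) and are jointly perfectly discriminable; each system has a unique deterministic effect $e_{\mathrm A}$, with $(e_{\mathrm A}|i)_{\mathrm A}=1$. Composition: for nontrivial $\mathrm A,\mathrm B$, the composite $\mathrm{AB}$ is the system of size $2D_{\mathrm A}D_{\mathrm B}$, with pure states $|(ij)_s)_{\mathrm{AB}}$, $1\le i\le D_{\mathrm A}$, $1\le j\le D_{\mathrm B}$, $s\in\{+,-\}$; parallel composition of pure states is $|i)_{\mathrm A}\boxtimes|j)_{\mathrm B}=\tfrac12\sum_{s=\pm}|(ij)_s)_{\mathrm{AB}}$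 (extended bilinearly), and for three systems $((ij)_{s_1}k)_{s_2}=(i(jk)_{s_1s_2})_{s_1}$, signs multiplying as $\pm1$. Transformations act linearly. Deterministic transformations (channels) $\mathcal C\in\mathsf{Tr}_1(\mathrm E\to\mathrm F)$ between nontrivial systems are exactly those for which, for each $j\in\{1,\dots,D_{\mathrm E}\}$, there is a probability distribution $\{\lambda^{(j)}_{m\tau}\}$ over $(m,\tau)\in\{1,\dots,D_{\mathrm F}\}\times\{+,-\}$ such that for every system $\mathrm A$ and every pure state, $(\mathcal I_{\mathrm A}\boxtimes\mathcal C)|(ij)_s)_{\mathrm{AE}}=\sum_{m,\tau}\lambda^{(j)}_{m\tau}|(im)_{\tau s})_{\mathrm{AF}}$. Multiple copies: $\mathrm A^{\boxtimes N}$ denotes $(\cdots((\mathrm A_1\mathrm A_2)\mathrm A_3)\cdots)\mathrm A_N$ with each $\mathrm A_k$ a copy of $\mathrm A$; its pure states are labelled $|\mathbf i_{\mathbf s})$ with $\mathbf i\in\{1,\dots,D_{\mathrm A}\}^N$, $\mathbf s\in\{+,-\}^{N-1}$, and $\rho^{\boxtimes N}=\sum_{\mathbf i,\mathbf s}p_{i_1}\cdots p_{i_N}2^{-(N-1)}|\mathbf i_{\mathbf s})$. The bibit $\mathrm B$ is the system of size $2$. Information content. A dilation of a state $\sigma$ of a system $\mathrm X$ is a state $\Psi$ of $\mathrm{XE}$ (for some system $\mathrm E$) with $(\mathcal I_{\mathrm X}\boxtimes e_{\mathrm E})\Psi=\sigma$. A refinement of a state $\Psi$ is a finite collection of states $\{\Gamma_i\}$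 belonging to a common preparation test with $\sum_i\Gamma_i=\Psi$. The operational norm of an element $\delta$ of the real span of states is $\|\delta\|_{\rm op}=\sup_{\{a_0,a_1\}}(a_0-a_1|\delta)$ over binary observation tests; in BCT it equals $\sum_k|\delta_k|$ for $\delta=\sum_k\delta_k|k)$ expanded in pure states. For a channel $\mathcal C$ on $\mathrm A^{\boxtimes N}$, $D(\rho^{\boxtimes N},\mathcal C)=\sup_{\Psi}\sup_{\{\Gamma_i\}}\sum_i\|(\mathcal C\boxtimes\mathcal I_{\mathrm E})\Gamma_i-\Gamma_i\|_{\rm op}$, the suprema over all dilations $\Psi$ of $\rho^{\boxtimes N}$ (all ancillas $\mathrm E$) and all refinements $\{\Gamma_i\}$ of $\Psi$. Let $E_{N,M,\varepsilon}(\rho)$ be the set of pairs of channels $\mathcal E\in\mathsf{Tr}_1(\mathrm A^{\boxtimes N}\to\mathrm B^{\boxtimes M})$, $\mathcal D\in\mathsf{Tr}_1(\mathrm B^{\boxtimes M}\to\mathrm A^{\boxtimes N})$ with $D(\rho^{\boxtimes N},\mathcal D\mathcal E)<\varepsilon$; $R_{N,\varepsilon}(\rho)=\min\{M:E_{N,M,\varepsilon}(\rho)\neq\emptyset\}/N$, and $I(\rho)=\lim_{\varepsilon\to0}\limsup_{N\to\infty}R_{N,\varepsilon}(\rho)$. *)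

(* Defs.v *)
From HB Require Import structures.
From mathcomp Require Import all_boot all_order all_algebra.
From mathcomp Require Import all_classical all_reals all_analysis.
Set Implicit Arguments. Unset Strict Implicit. Unset Printing Implicit Defensive.
Import Order.TTheory GRing.Theory Num.Theory.
Import numFieldNormedType.Exports.
Local Open Scope classical_set_scope.
Local Open Scope ring_scope.

(* A nontrivial system of size D has D pure states; a (possibly unnormalized)  *)
(* element of the span of its states is a real vector indexed by a finite type *)
(* L of pure-state labels (#|L| = D).  Signs + / - are encoded as false/true,  *)
(* so the sign product is [addb].                                              *)

Section BCT.
Variable R : realType.

(* pure-state labels of A^{[x]N} with N = n.+1 and D_A = D : (i, s) with     *)
(* i in {1..D}^N and s in {+,-}^{N-1}                                        *)
Definition LabN (D n : nat) : finType :=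
  ({ffun 'I_n.+1 -> 'I_D} * {ffun 'I_n -> bool})%type.

(* pure-state labels of the composite XE, E nontrivial of size d:            *)
(* |(x k)_t)_{XE}                                                            *)
Definition LabAnc (L : finType) (d : nat) : finType := (L * 'I_d * bool)%type.

Definition is_state (L : finType) (v : L -> R) :=
  (forall x, 0 <= v x) /\ \sum_(x : L) v x <= 1.
Definition is_deterministic (L : finType) (v : L -> R) :=
  is_state v /\ \sum_(x : L) v x = 1.

Definition prep_test (L : finType) (r : nat) (G : 'I_r -> L -> R) :=
  (forall i, is_state (G i)) /\ is_deterministic (fun x => \sum_(i < r) G i x).

Definition refinement (L : finType) (Psi : L -> R) (r : nat) (G : 'I_r -> L -> R) :=
  prep_test G /\ forall x, \sum_(i < r) G i x = Psi x.

Definition opnorm (L : finType) (v : L -> R) : R := \sum_(x : L) `|v x|.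

(* dilation of sigma (state of X) with a nontrivial ancilla E of size d:     *)
(* (I_X [x] e_E) |(j k)_s) = |j)_X                                           *)
Definition dilation (L : finType) (sigma : L -> R) (d : nat) (Psi : LabAnc L d -> R) :=
  is_state Psi /\
  forall j : L, \sum_(k < d) \sum_(s : bool) Psi (j, k, s) = sigma j.

Definition is_distr (L : finType) (f : L -> R) :=
  (forall x, 0 <= f x) /\ \sum_(x : L) f x = 1.

(* channels E -> F between nontrivial systems: for each input label j a       *)
(* probability distribution lam j over (output label m, sign tau)            *)
Definition is_channel (L1 L2 : finType) (lam : L1 -> L2 * bool -> R) :=
  forall j, is_distr (lam j).

(* action of C on X alone (C = C [x] I_I):  C|j) = sum_{m,tau} lam_{m tau} |m) *)
Definition act_triv (L1 L2 : finType) (lam : L1 -> L2 * bool -> R) (v : L1 -> R) :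
  L2 -> R := fun m => \sum_(j : L1) \sum_(t : bool) v j * lam j (m, t).

(* action of C [x] I_E, E of size d:                                         *)
(* (C [x] I_E) |(j k)_s) = sum_{m,tau} lam^{(j)}_{m tau} |(m k)_{tau s})       *)
Definition act_anc (L1 L2 : finType) (lam : L1 -> L2 * bool -> R) (d : nat)
  (Psi : LabAnc L1 d -> R) : LabAnc L2 d -> R :=
  fun y => let: (m, k, u) := y in
    \sum_(j : L1) \sum_(t : bool) Psi (j, k, addb t u) * lam j (m, t).

(* D(sigma, C) where C is given by its action on X (Ttriv) and on XE for each *)
(* nontrivial ancilla of size d (Tanc d): the supremum over all dilations    *)
(* (all ancillas, including the trivial one) and all their refinements of    *)
(* sum_i || (C [x] I_E) G_i - G_i ||_op                                       *)
Definition disturb_vals (L : finType) (sigma : L -> R)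
  (Ttriv : (L -> R) -> (L -> R))
  (Tanc : forall d : nat, (LabAnc L d -> R) -> (LabAnc L d -> R)) : set R :=
  [set v | (exists (r : nat) (G : 'I_r -> L -> R),
              refinement sigma G /\
              v = \sum_(i < r) opnorm (fun x => Ttriv (G i) x - G i x))
        \/ (exists (d : nat) (Psi : LabAnc L d -> R), (1 < d)%N /\ dilation sigma Psi /\
              exists (r : nat) (G : 'I_r -> LabAnc L d -> R),
                refinement Psi G /\
                v = \sum_(i < r) opnorm (fun x => Tanc d (G i) x - G i x))].

Definition disturbance (L : finType) (sigma : L -> R) Ttriv Tanc : \bar R :=
  ereal_sup [set v%:E | v in @disturb_vals L sigma Ttriv Tanc].

Definition tensor_power (D n : nat) (p : 'I_D -> R) : LabN D n -> R :=
  fun y => (\prod_(k < n.+1) p (y.1 k)) * (2^-1) ^+ n.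

(* E_{N,M,eps}(rho) nonempty, N = n.+1, M = m.+1; B is the bibit (size 2)    *)
Definition codes_exist (D : nat) (p : 'I_D -> R) (n m : nat) (eps : R) :=
  exists (lamE : LabN D n -> LabN 2 m * bool -> R)
         (lamD : LabN 2 m -> LabN D n * bool -> R),
    is_channel lamE /\ is_channel lamD /\
    (disturbance (@tensor_power D n p)
       (fun v => act_triv lamD (act_triv lamE v))
       (fun d Psi => act_anc lamD (act_anc lamE Psi)) < eps%:E)%E.

(* R_{N,eps}(rho) = min{M : E_{N,M,eps} nonempty} / N   (+oo if no such M)    *)
Definition rate (D : nat) (p : 'I_D -> R) (n : nat) (eps : R) : \bar R :=
  ereal_inf [set ((m.+1)%:R / (n.+1)%:R)%:E | m in [set m | codes_exist p n m eps]].

Definition limsup_rate (D : nat) (p : 'I_D -> R) (eps : R) : \bar R :=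
  limn_esup (fun n => rate p n eps).

Definition log2 (x : R) : R := ln x / ln 2.

Definition shannon (D : nat) (p : 'I_D -> R) : R := - \sum_(i < D) p i * log2 (p i).

End BCT.

(* Main.v *)
Require Import Defs.
Set Warnings "-notation-overridden,-ambiguous-paths,-notation-incompatible-prefix".
Set Implicit Arguments. Unset Strict Implicit. Unset Printing Implicit Defensive.
From HB Require Import structures.
From mathcomp Require Import all_boot all_order all_algebra.
From mathcomp Require Import all_classical all_reals all_analysis.
From mathcomp Require Import ring lra.
Import Order.TTheory GRing.Theory Num.Theory.
Import numFieldNormedType.Exports.
Local Open Scope classical_set_scope.
Local Open Scope ring_scope.
Section Gen.
Variable R : realType.

Lemma sum_delta (X : finType) (F : X -> R) (y0 : X) :
  \sum_y F y * (y == y0)%:R = F y0.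
Proof.
rewrite (bigD1 y0) //= eqxx mulr1 big1 ?addr0 // => y /negbTE ->.
by rewrite mulr0.
Qed.

Lemma sum_delta' (X : finType) (y0 : X) :
  \sum_y ((y0 == y)%:R : R) = 1.
Proof.
rewrite -[RHS](sum_delta (fun _ => 1) y0); apply: eq_bigr => y _.
by rewrite mul1r eq_sym.
Qed.

Definition push (X Y : finType) (g : X -> Y) (v : X -> R) : Y -> R :=
  fun y => \sum_x v x * (g x == y)%:R.

Lemma push_comp (X Y Z : finType) (g1 : X -> Y) (g2 : Y -> Z) v z :
  push g2 (push g1 v) z = push (g2 \o g1) v z.
Proof.
rewrite /push; under eq_bigr do rewrite mulr_suml.
rewrite exchange_big; apply: eq_bigr => x _ /=.
under eq_bigr do rewrite -mulrA.
rewrite -mulr_sumr; congr (_ * _).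
rewrite -[RHS](sum_delta (fun y => (g2 y == z)%:R) (g1 x)).
by apply: eq_bigr => y _; rewrite mulrC [y == _]eq_sym.
Qed.

Lemma opnorm_push (X : finType) (g : X -> X) (v : X -> R) :
  opnorm (fun x => push g v x - v x) <= 2 * \sum_(x | g x != x) `|v x|.
Proof.
have E y : push g v y - v y = \sum_x v x * ((g x == y)%:R - (x == y)%:R).
  rewrite /push; under [in RHS]eq_bigr do rewrite mulrBr.
  by rewrite sumrB; congr (_ - _); rewrite sum_delta.
rewrite /opnorm; under eq_bigr do rewrite E.
apply: le_trans (ler_sum _ (fun y _ => ler_norm_sum _ _ _)) _.
rewrite exchange_big /= mulr_sumr [X in _ <= X]big_mkcond /=.
apply: ler_sum => x _.
under eq_bigr do rewrite normrM.
rewrite -mulr_sumr.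
case: (eqVneq (g x) x) => [gx|gx] /=.
  rewrite gx big1 ?mulr0 // => y _; by rewrite subrr normr0.
rewrite mulrC; apply: ler_wpM2r => //.
apply: le_trans (ler_sum _ (fun y _ => ler_normB _ _)) _.
rewrite big_split /= !(eq_bigr _ (fun y _ => normr_nat _ _)).
by rewrite !sum_delta'.
Qed.

Lemma refine_push (X : finType) (g : X -> X) (sigma : X -> R) r (G : 'I_r -> X -> R) :
  (forall i x, 0 <= G i x) -> (forall x, \sum_(i < r) G i x = sigma x) ->
  \sum_(i < r) opnorm (fun x => push g (G i) x - G i x) <=
  2 * \sum_(x | g x != x) sigma x.
Proof.
move=> G0 Gs.
apply: le_trans (ler_sum _ (fun i _ => opnorm_push g (G i))) _.
rewrite -mulr_sumr ler_wpM2l // exchange_big /=.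
apply: ler_sum => x _; rewrite -Gs; apply: ler_sum => i _.
by rewrite ger0_norm.
Qed.

End Gen.
Section Acts.
Variable R : realType.

Lemma natr_and (a b : bool) : ((a && b)%:R : R) = a%:R * b%:R.
Proof. by case: a; case: b; rewrite ?mulr0 ?mulr1 ?mul0r. Qed.

Lemma sum_pair (I J : finType) (F : I * J -> R) :
  \sum_x F x = \sum_i \sum_j F (i, j).
Proof. by rewrite pair_bigA; apply: eq_bigr => -[]. Qed.

Definition dlam (L1 L2 : finType) (f : L1 -> L2) : L1 -> L2 * bool -> R :=
  fun j y => ((f j, false) == y)%:R.

Lemma is_channel_dlam (L1 L2 : finType) (f : L1 -> L2) : is_channel (dlam f).
Proof. by move=> j; split => [y|]; rewrite /dlam ?ler0n ?sum_delta'. Qed.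

Lemma act_triv_dlam (L1 L2 : finType) (f : L1 -> L2) v m :
  act_triv (dlam f) v m = push f v m.
Proof.
rewrite /act_triv /push; apply: eq_bigr => j _.
by rewrite big_bool /= /dlam !xpair_eqE andbF andbT mulr0 add0r.
Qed.

Lemma act_anc_dlam (L1 L2 : finType) (f : L1 -> L2) d (Psi : LabAnc L1 d -> R) y :
  act_anc (dlam f) Psi y =
  push (fun x : LabAnc L1 d => (f x.1.1, x.1.2, x.2)) Psi y.
Proof.
move: y => [[m k] u]; rewrite /act_anc /push (sum_pair (I:=(L1 * 'I_d)%type) (J:=bool)).
rewrite (sum_pair (I:=L1) (J:='I_d)).
apply: eq_bigr => j _.
rewrite big_bool /= /dlam !xpair_eqE /= andbF andbT mulr0 add0r.
under eq_bigr => k' _ do under eq_bigr => u' _ do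
  rewrite /= !xpair_eqE !natr_and [_ * (u' == u)%:R]mulrC mulrA.
under eq_bigr => k' _ do rewrite -mulr_suml (sum_delta (fun u' => Psi (j, k', u'))) mulrA.
by rewrite (sum_delta (fun k' => Psi (j, k', u) * _)).
Qed.

End Acts.
Arguments dlam {R L1 L2} f _ _.
Section Prod.
Variable R : realType.
Variables (D n : nat) (p : 'I_D -> R).
Hypothesis p0 : forall i, 0 <= p i.
Hypothesis p1 : \sum_(i < D) p i = 1.

Definition Pr (i : {ffun 'I_n.+1 -> 'I_D}) : R := \prod_(k < n.+1) p (i k).

Lemma Pr_ge0 i : 0 <= Pr i.
Proof. by apply: prodr_ge0 => k _. Qed.

Lemma sum_Pr : \sum_i Pr i = 1.
Proof.
rewrite /Pr -(bigA_distr_bigA (fun (k : 'I_n.+1) (a : 'I_D) => p a)) /=.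
by rewrite big1 // => k _.
Qed.

Lemma half_pow : ((2^-1) ^+ n *+ (2 ^ n)%N : R) = 1.
Proof.
by rewrite -mulr_natr natrX -exprMn mulVf ?expr1n // pnatr_eq0.
Qed.

Lemma tp_mass (Q : pred {ffun 'I_n.+1 -> 'I_D}) :
  \sum_(y : LabN D n | Q y.1) tensor_power p y = \sum_(i | Q i) Pr i.
Proof.
rewrite big_mkcond (sum_pair (I:={ffun 'I_n.+1 -> 'I_D}) (J:={ffun 'I_n -> bool})).
rewrite [RHS]big_mkcond; apply: eq_bigr => i _ /=.
case: (Q i); last by rewrite big1.
rewrite /tensor_power /= sumr_const card_ffun card_bool card_ord.
by rewrite -mulrnAr half_pow mulr1.
Qed.

Lemma tp_ge0 (y : LabN D n) : 0 <= tensor_power p y.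
Proof. by rewrite /tensor_power mulr_ge0 ?exprn_ge0 ?invr_ge0 ?Pr_ge0. Qed.

Lemma sum_tp : \sum_(y : LabN D n) tensor_power p y = 1.
Proof. by rewrite -sum_Pr -(tp_mass xpredT). Qed.

Lemma prod_if1 (a : 'I_n.+1) (f : 'I_n.+1 -> R) :
  \prod_k (if k == a then f k else 1) = f a.
Proof. by rewrite (bigD1 a) //= eqxx big1 ?mulr1 // => k /negbTE ->. Qed.

Lemma cross (g : 'I_D -> R) a b : \sum_(x < D) p x * g x = 0 ->
  \sum_i Pr i * (g (i a) * g (i b)) = (a == b)%:R * \sum_x p x * g x ^+ 2.
Proof.
move=> g0.
pose F := fun (k : 'I_n.+1) (x : 'I_D) =>
  p x * ((if k == a then g x else 1) * (if k == b then g x else 1)).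
have E i : Pr i * (g (i a) * g (i b)) = \prod_k F k (i k).
  rewrite /F big_split /= big_split /=.
  by rewrite (prod_if1 a (fun k => g (i k))) (prod_if1 b (fun k => g (i k))).
rewrite (eq_bigr _ (fun i _ => E i)) -(bigA_distr_bigA F) (bigD1 a) //= /F ?eqxx.
case: (eqVneq a b) => [<-|ab].
  rewrite [\prod_(i | _) _]big1 => [|k ka]; last first.
    by rewrite (negbTE ka); under eq_bigr do rewrite !mulr1; rewrite p1.
  by rewrite mulr1 mul1r; apply: eq_bigr => x _; rewrite expr2.
rewrite ?(negbTE ab) ?eq_sym ?(negbTE ab) mul0r.
under eq_bigr do rewrite mulr1.
by rewrite g0 mul0r.
Qed.

Lemma variance (g : 'I_D -> R) : \sum_(x < D) p x * g x = 0 ->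
  \sum_i Pr i * (\sum_k g (i k)) ^+ 2 = n.+1%:R * \sum_x p x * g x ^+ 2.
Proof.
move=> g0.
under eq_bigr => i _ do rewrite expr2 mulr_suml mulr_sumr.
rewrite exchange_big /=.
rewrite (eq_bigr (fun a => \sum_b \sum_i Pr i * (g (i a) * g (i b)))) => [|a _]; last first.
  by under eq_bigr do rewrite !mulr_sumr; rewrite exchange_big.
under eq_bigr => a _ do under eq_bigr => b _ do rewrite (cross _ _ g0).
under eq_bigr => a _ do rewrite -mulr_suml sum_delta' mul1r.
by rewrite sumr_const card_ord mulr_natl.
Qed.

End Prod.
Section Typ.
Variable R : realType.
Variables (D n : nat) (p : 'I_D -> R).
Hypothesis p0 : forall i, 0 <= p i.
Hypothesis p1 : \sum_(i < D) p i = 1.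

Definition e2 (x : R) := expR (x * ln 2).

Lemma ln2_gt0 : 0 < ln (2 : R).
Proof. by apply: ln_gt0; rewrite ltr1n. Qed.

Lemma e2_le x y : x <= y -> e2 x <= e2 y.
Proof. by move=> xy; rewrite /e2 ler_expR ler_wpM2r // ltW // ln2_gt0. Qed.

Lemma e2_lt x y : e2 x < e2 y -> x < y.
Proof. by rewrite /e2 ltr_expR ltr_pM2r // ln2_gt0. Qed.

Lemma e2D x y : e2 (x + y) = e2 x * e2 y.
Proof. by rewrite /e2 mulrDl expRD. Qed.

Lemma e2N x : e2 (- x) = (e2 x)^-1.
Proof. by rewrite /e2 mulNr expRN. Qed.

Lemma e2_gt0 x : 0 < e2 x.
Proof. exact: expR_gt0. Qed.

Lemma e2_nat k : e2 k%:R = 2 ^+ k.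
Proof. by rewrite /e2 expRM_natl lnK // posrE. Qed.

Lemma e2_log2 c : 0 < c -> e2 (log2 c) = c.
Proof.
move=> c0; rewrite /e2 /log2 divfK ?lnK ?posrE //.
by rewrite gt_eqF // ln2_gt0.
Qed.

Definition ell (a : 'I_D) := - log2 (p a).
Definition Zs (i : {ffun 'I_n.+1 -> 'I_D}) := \sum_k ell (i k).
Definition Ty (d : R) : {set {ffun 'I_n.+1 -> 'I_D}} := finset (fun i =>
  (0 < Pr p i) && (`|Zs i - n.+1%:R * shannon p| <= n.+1%:R * d)).
Definition sig2 := \sum_a p a * (ell a - shannon p) ^+ 2.

Lemma shannonE : shannon p = \sum_a p a * ell a.
Proof. by rewrite /shannon -sumrN; apply: eq_bigr => a _; rewrite /ell mulrN. Qed.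

Lemma Pr_e2 i : 0 < Pr p i -> Pr p i = e2 (- Zs i).
Proof.
move=> Pi.
have pk k : 0 < p (i k).
  rewrite lt_neqAle p0 andbT eq_sym; apply/negP => /eqP pk0.
  by move: Pi; rewrite /Pr (bigD1 k) //= pk0 mul0r ltxx.
rewrite /e2 /Zs -sumrN mulr_suml expR_sum /Pr; apply: eq_bigr => k _.
rewrite /ell opprK /log2 divfK ?lnK ?posrE //.
by rewrite gt_eqF // ln2_gt0.
Qed.

Lemma Ty_ub d i : i \in Ty d -> Pr p i <= e2 (- (n.+1%:R * (shannon p - d))).
Proof.
rewrite /Ty finset.in_set => /andP[Pi]; rewrite ler_norml => /andP[h1 h2].
rewrite Pr_e2 //; apply: e2_le; lra.
Qed.

Lemma Ty_lb d i : i \in Ty d -> e2 (- (n.+1%:R * (shannon p + d))) <= Pr p i.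
Proof.
rewrite /Ty finset.in_set => /andP[Pi]; rewrite ler_norml => /andP[h1 h2].
rewrite Pr_e2 //; apply: e2_le; lra.
Qed.

Lemma card_Ty d : #|Ty d|%:R <= e2 (n.+1%:R * (shannon p + d)).
Proof.
set x := n.+1%:R * (shannon p + d).
have h : #|Ty d|%:R * e2 (- x) <= 1.
  have -> : #|Ty d|%:R * e2 (- x) = \sum_(i in Ty d) e2 (- x).
    by rewrite sumr_const mulr_natl.
  rewrite -[X in _ <= X](sum_Pr n p1).
  apply: le_trans (ler_sum _ (fun i (hi : i \in Ty d) => Ty_lb hi)) _.
  rewrite [X in _ <= X](bigID (fun i => i \in Ty d)) /= lerDl.
  by apply: sumr_ge0 => i _; apply: Pr_ge0.
move: h; rewrite e2N -ler_pdivlMr ?invr_gt0 ?e2_gt0 //.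
by rewrite invrK mul1r.
Qed.

Lemma mass_Ty d : 0 < d ->
  \sum_(i | i \notin Ty d) Pr p i <= sig2 / (n.+1%:R * d ^+ 2).
Proof.
move=> d0.
set N := n.+1%:R : R.
have N0 : 0 < N by rewrite ltr0n.
have Nd0 : 0 < (N * d) ^+ 2 by rewrite exprn_gt0 // mulr_gt0.
have step i : i \notin Ty d ->
    Pr p i <= Pr p i * (Zs i - N * shannon p) ^+ 2 / (N * d) ^+ 2.
  rewrite /Ty finset.in_set negb_and -leNgt => /orP[Pi|].
    have -> : Pr p i = 0 by apply/eqP; rewrite eq_le Pi Pr_ge0.
    by rewrite !mul0r.
  rewrite -ltNge => h.
  rewrite -mulrA ler_peMr ?Pr_ge0 // ler_pdivlMr // mul1r.
  rewrite -[X in _ <= X]real_normK ?num_real // lerXn2r ?nnegrE ?mulr_ge0 ?ltW //.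
  by apply: lt_trans h; rewrite mulr_gt0.
apply: le_trans (ler_sum _ step) _.
apply: le_trans (_ : \sum_(i : {ffun 'I_n.+1 -> 'I_D}) Pr p i * (Zs i - N * shannon p) ^+ 2 / (N * d) ^+ 2 <= _).
  rewrite [X in _ <= X](bigID (fun i => i \notin Ty d)) /= lerDl.
  apply: sumr_ge0 => i _; apply: mulr_ge0; last by rewrite invr_ge0 ltW.
  by apply: mulr_ge0; [apply: Pr_ge0|apply: sqr_ge0].
rewrite -mulr_suml.
have -> : \sum_(i : {ffun 'I_n.+1 -> 'I_D}) Pr p i * (Zs i - N * shannon p) ^+ 2 =
          \sum_(i : {ffun 'I_n.+1 -> 'I_D}) Pr p i * (\sum_k (ell (i k) - shannon p)) ^+ 2.
  apply: eq_bigr => i _; congr (_ * (_ ^+ 2)).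
  by rewrite sumrB sumr_const card_ord mulr_natl.
rewrite (@variance R D n p p1 (fun a => ell a - shannon p)) ; last first.
  rewrite -[RHS](subrr (shannon p)).
  under eq_bigr do rewrite mulrBr.
  by rewrite sumrB -mulr_suml p1 mul1r shannonE.
rewrite -/sig2 /N expr2 expr2.
have N1 : n.+1%:R != 0 :> R by rewrite pnatr_eq0.
have d1 : d != 0 by rewrite gt_eqF.
rewrite le_eqVlt; apply/orP; left; apply/eqP; field.
by rewrite d1 addrC natr1 N1.
Qed.

End Typ.
Lemma inj_code (A B : finType) (S : {set A}) (a0 : A) (b0 : B) :
  (#|S| <= #|B|)%N -> exists (f : A -> B) (g : B -> A), forall x, x \in S -> g (f x) = x.
Proof.
move=> SB.
exists (fun x => nth b0 (enum B) (index x (enum S))).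
exists (fun y => nth a0 (enum S) (index y (enum B))).
move=> x xS.
have xi : (index x (enum S) < size (enum S))%N by rewrite index_mem mem_enum.
rewrite index_uniq ?enum_uniq //; last first.
  by apply: leq_trans xi _; rewrite -!cardE.
by rewrite nth_index // mem_enum.
Qed.

Section Ach.
Variable R : realType.

Lemma sub_sum (X : finType) (P Q : pred X) (F : X -> R) :
  (forall x, 0 <= F x) -> (forall x, P x -> Q x) ->
  \sum_(x | P x) F x <= \sum_(x | Q x) F x.
Proof.
move=> F0 PQ; rewrite big_mkcond [X in _ <= X]big_mkcond; apply: ler_sum => x _.
case: (boolP (P x)) => Px; first by rewrite (PQ x Px).
by case: (Q x).
Qed.

Lemma opnorm_ext (X : finType) (u w : X -> R) :
  (forall x, u x = w x) -> opnorm u = opnorm w.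
Proof. by move=> uw; rewrite /opnorm; apply: eq_bigr => x _; rewrite uw. Qed.

Lemma push_ext (X Y : finType) (g : X -> Y) (v w : X -> R) y :
  (forall x, v x = w x) -> push g v y = push g w y.
Proof. by move=> vw; rewrite /push; apply: eq_bigr => x _; rewrite vw. Qed.

Lemma Ttriv_eq (L1 L2 : finType) (f : L1 -> L2) (g : L2 -> L1) (v : L1 -> R) x :
  act_triv (dlam g) (act_triv (dlam f) v) x = push (g \o f) v x.
Proof.
by rewrite act_triv_dlam (push_ext _ _ (act_triv_dlam f v)) push_comp.
Qed.

Lemma Tanc_eq (L1 L2 : finType) (f : L1 -> L2) (g : L2 -> L1) d
  (Psi : LabAnc L1 d -> R) x :
  act_anc (dlam g) (act_anc (dlam f) Psi) x =
  push (fun x : LabAnc L1 d => (g (f x.1.1), x.1.2, x.2)) Psi x.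
Proof.
rewrite act_anc_dlam (push_ext _ _ (act_anc_dlam f Psi)) push_comp.
by apply: push_ext.
Qed.

Lemma achieve (D n m : nat) (p : 'I_D -> R) (eps : R)
  (p0 : forall i, 0 <= p i) (p1 : \sum_(i < D) p i = 1)
  (T : {set {ffun 'I_n.+1 -> 'I_D}}) :
  (1 < D)%N -> (#|T| * 2 ^ n <= 2 ^ m.+1 * 2 ^ m)%N ->
  2 * \sum_(i | i \notin T) Pr p i < eps -> codes_exist p n m eps.
Proof.
move=> D1 card_ok mass_ok.
pose S : {set LabN D n} := finset.setX T (finset.setT).
have a0 : LabN D n := ([ffun => Ordinal (ltnW D1)], [ffun => false]).
have b0 : LabN 2 m := ([ffun => ord0], [ffun => false]).
have cS : (#|S| <= #|LabN 2 m|)%N.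
  rewrite cardsX cardsT /LabN card_prod !card_ffun !card_ord card_bool.
  exact: card_ok.
have [f [g fg]] := inj_code a0 b0 cS.
have bad (x : LabN D n) : g (f x) != x -> x.1 \notin T.
  case: x => i s /=; apply: contra => xT; apply/eqP; apply: fg.
  by rewrite finset.in_setX xT finset.in_setT.
set mass := \sum_(i | i \notin T) Pr p i.
have massE : \sum_(x : LabN D n | x.1 \notin T) tensor_power p x = mass.
  exact: tp_mass.
exists (dlam f), (dlam g); split; first exact: is_channel_dlam.
split; first exact: is_channel_dlam.
apply: le_lt_trans (_ : (_ <= (2 * mass)%:E)%E) _; last by rewrite lte_fin.
apply: ge_ereal_sup => _ [v hv <-]; rewrite lee_fin.
case: hv => [[r [G [Gref ->]]]|[d [Psi [d1 [Pdil [r [G [Gref ->]]]]]]]].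
  have G0 i x : 0 <= G i x by case: Gref => -[Gs _] _; case: (Gs i) => + _; apply.
  rewrite (eq_bigr (fun i => opnorm (fun x => push (g \o f) (G i) x - G i x)));
    last by move=> i _; apply: opnorm_ext => x; rewrite /= Ttriv_eq.
  apply: le_trans (refine_push _ G0 Gref.2) _.
  rewrite ler_wpM2l // -massE; apply: sub_sum => [x|x]; first exact: tp_ge0.
  exact: bad.
have G0 i x : 0 <= G i x by case: Gref => -[Gs _] _; case: (Gs i) => + _; apply.
rewrite (eq_bigr (fun i => opnorm (fun x =>
    push (fun x : LabAnc (LabN D n) d => (g (f x.1.1), x.1.2, x.2)) (G i) x - G i x)));
  last by move=> i _; apply: opnorm_ext => x; rewrite /= Tanc_eq.
apply: le_trans (refine_push _ G0 Gref.2) _.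
rewrite ler_wpM2l // -massE.
have Psi0 x : 0 <= Psi x by case: Pdil => -[+ _] _; apply.
apply: le_trans (sub_sum (Q := fun x : LabAnc (LabN D n) d => x.1.1.1 \notin T) Psi0 _) _.
  move=> [[j k] u] /= h; apply: bad; apply: contraNneq h => ->.
  by [].
rewrite le_eqVlt; apply/orP; left; apply/eqP.
rewrite big_mkcond (sum_pair (I:=(LabN D n * 'I_d)%type) (J:=bool)).
rewrite (sum_pair (I:=LabN D n) (J:='I_d)) [RHS]big_mkcond; apply: eq_bigr => j _ /=.
case hj: (j.1 \in T) => /=.
  by rewrite big1 // => k _; rewrite big1.
by case: Pdil => _ ->.
Qed.
End Ach.
Section Conv.
Variable R : realType.

Lemma term_le_sum (X : finType) (F : X -> R) y :
  (forall x, 0 <= F x) -> F y <= \sum_x F x.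
Proof.
by move=> F0; rewrite (bigD1 y) //= lerDl sumr_ge0.
Qed.

Lemma converse (D n m : nat) (p : 'I_D -> R) (eps : R)
  (p0 : forall i, 0 <= p i) (p1 : \sum_(i < D) p i = 1)
  (T : {set {ffun 'I_n.+1 -> 'I_D}}) (c : R) : 0 <= c ->
  (forall i, i \in T -> Pr p i <= c) -> codes_exist p n m eps ->
  1 - eps < \sum_(i | i \notin T) Pr p i + c * (2^-1) ^+ n * #|LabN 2 m|%:R.
Proof.
move=> c0 Tc [lamE [lamD [chE [chD Hd]]]].
set L := LabN D n.
set rho := tensor_power p : L -> R.
have rho0 x : 0 <= rho x by apply: tp_ge0.
have rho1 : \sum_x rho x = 1 by apply: sum_tp.
pose a (x : L) (y : LabN 2 m) := \sum_t lamE x (y, t).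
pose b (y : LabN 2 m) (x : L) := \sum_t lamD y (x, t).
pose W x := \sum_y a x y * b y x.
have lamE0 x z : 0 <= lamE x z by case: (chE x) => + _; apply.
have lamD0 y z : 0 <= lamD y z by case: (chD y) => + _; apply.
have a0 x y : 0 <= a x y by apply: sumr_ge0.
have b0 y x : 0 <= b y x by apply: sumr_ge0.
have asum x : \sum_y a x y = 1.
  by rewrite -(sum_pair (lamE x)); case: (chE x).
have bsum y : \sum_x b y x = 1.
  by rewrite -(sum_pair (lamD y)); case: (chD y).
have a1 x y : a x y <= 1 by rewrite -(asum x); apply: term_le_sum.
have b1 y x : b y x <= 1 by rewrite -(bsum y); apply: term_le_sum.
have W0 x : 0 <= W x by apply: sumr_ge0 => y _; apply: mulr_ge0.
have W1 x : W x <= 1.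
  rewrite -(asum x); apply: ler_sum => y _.
  by rewrite ler_piMr.
have Wsum : \sum_x W x <= #|LabN 2 m|%:R.
  apply: le_trans (_ : \sum_x \sum_y b y x <= _).
    apply: ler_sum => x _; apply: ler_sum => y _.
    by rewrite ler_piMl.
  rewrite exchange_big /=.
  under eq_bigr do rewrite bsum.
  by rewrite sumr_const.
pose G (i : 'I_#|@predT L|) (x : L) := rho x * (x == enum_val i)%:R.
have sumG x : \sum_i G i x = rho x.
  rewrite /G -mulr_sumr.
  rewrite -(big_enum_val (A := predT) (fun y => (x == y)%:R)) /=.
  by rewrite big_mkcond /= sum_delta' mulr1.
have TG (e : L) : act_triv lamD (act_triv lamE (fun x => rho x * (x == e)%:R)) e
                  = rho e * W e.
  rewrite /act_triv /W mulr_sumr; apply: eq_bigr => y _.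
  have -> : \sum_j \sum_t rho j * (j == e)%:R * lamE j (y, t) = rho e * a e y.
    under eq_bigr do rewrite -mulr_sumr mulrAC.
    by rewrite (sum_delta (fun j => rho j * a j y)).
  by rewrite /b mulrA [RHS]mulr_sumr.
set V := \sum_i opnorm (fun x => act_triv lamD (act_triv lamE (G i)) x - G i x).
have Vin : (V%:E <= disturbance rho (fun v => act_triv lamD (act_triv lamE v))
                (fun d Psi => act_anc lamD (act_anc lamE Psi)))%E.
  apply: ereal_sup_ubound; exists V => //; left; exists #|@predT L|, G; split => //.
  split; last exact: sumG.
  split.
    move=> i; split => [x|]; first by rewrite /G mulr_ge0.
    rewrite /G (sum_delta rho (enum_val i)) -rho1; apply: term_le_sum => x.
    exact: rho0.
  have -> : (fun x => \sum_i G i x) = rho by apply: boolp.funext => x; exact: sumG.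
  by split => //; split => //; rewrite rho1.
have Vlt : V < eps by rewrite -lte_fin; apply: le_lt_trans Vin Hd.
have VW : 1 - \sum_x rho x * W x <= V.
  rewrite -rho1 -sumrB.
  rewrite (_ : \sum_x (rho x - rho x * W x) = \sum_(x in predT) (rho x - rho x * W x)); last first.
    by apply: eq_bigl => x; rewrite inE.
  rewrite (big_enum_val (A := predT) (fun y => rho y - rho y * W y)).
  apply: ler_sum => i _.
  set e := enum_val i.
  apply: le_trans (_ : `|act_triv lamD (act_triv lamE (G i)) e - G i e| <= _).
    rewrite -normrN; apply: le_trans (ler_norm _).
    by rewrite /G -/e eqxx mulr1 TG opprB.
  exact: (term_le_sum (F := fun x => `|act_triv lamD (act_triv lamE (G i)) x - G i x|) e (fun x => normr_ge0 _)).
have split_sum : \sum_x rho x * W x <=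
    \sum_(i | i \notin T) Pr p i + c * (2^-1) ^+ n * #|LabN 2 m|%:R.
  rewrite (bigID (fun x : L => x.1 \in T)) /= addrC; apply: lerD.
    rewrite -(tp_mass p (fun i => i \notin T)).
    by apply: ler_sum => x _; rewrite ler_piMr.
  apply: le_trans (_ : \sum_(x | x.1 \in T) c * (2^-1) ^+ n * W x <= _).
    apply: ler_sum => x xT; apply: ler_wpM2r => //.
    by rewrite /rho /tensor_power ler_wpM2r ?exprn_ge0 ?invr_ge0 // Tc.
  rewrite -mulr_sumr ler_wpM2l ?mulr_ge0 ?exprn_ge0 ?invr_ge0 //.
  apply: le_trans Wsum; rewrite [X in _ <= X](bigID (fun x : L => x.1 \in T)) /=.
  by rewrite lerDl sumr_ge0.
lra.
Qed.

End Conv.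
Section Asym.
Variable R : realType.
Variables (D : nat) (p : 'I_D -> R).
Hypothesis p0 : forall i, 0 <= p i.
Hypothesis p1 : \sum_(i < D) p i = 1.
Hypothesis D1 : (1 < D)%N.

Lemma H_ge0 : 0 <= shannon p.
Proof.
rewrite shannonE; apply: sumr_ge0 => a _; apply: mulr_ge0 => //.
rewrite /ell /log2 oppr_ge0 pmulr_lle0 ?invr_gt0 ?ln2_gt0 //.
apply: ln_le0; rewrite -p1; exact: (term_le_sum (F := p)).
Qed.

Lemma rate_ub eps d : 0 < eps -> 0 < d ->
  \forall n \near \oo, (rate p n eps <= ((shannon p + 1) / 2 + d)%:E)%E.
Proof.
move=> e0 d0.
have Hs0 := H_ge0.
near=> n.
have h1 : 3 / d < n%:R by near: n; apply: nbhs_infty_gtr.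
have h2 : 2 * sig2 p / (d ^+ 2 * eps) < n%:R by near: n; apply: nbhs_infty_gtr.
set N : R := n.+1%:R.
have N0 : 0 < N by rewrite ltr0n.
have nN : n%:R = N - 1 by rewrite /N -natr1 addrK.
set H := shannon p.
set X : R := (N * (H + d) + n%:R) / 2.
have X0 : 0 <= X.
  by rewrite /X divr_ge0 // addr_ge0 // mulr_ge0 // ?addr_ge0 // ltW.
set m := (Num.truncn X).+1.
have mX : X < m%:R by apply: truncnS_gt.
have mX2 : m%:R <= X + 1 by rewrite /m -natr1 lerD2r truncn_le.
have hS : [set (k.+1%:R / n.+1%:R)%:E | k in [set k | codes_exist p n k eps]]
   ((m.+1%:R / N)%:E).
  exists m => //.
  apply: (achieve p0 p1 (T := Ty n p d)) => //.
    rewrite -(ler_nat R) !natrM !natrX -exprS -exprD.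
    apply: le_trans (_ : e2 (N * (H + d)) * e2 n%:R <= _).
      rewrite e2_nat; apply: ler_wpM2r; first by rewrite exprn_ge0.
      exact: card_Ty.
    rewrite -e2D -e2_nat; apply: e2_le.
    rewrite natrD -natr1; move: mX; rewrite /X; lra.
  apply: le_lt_trans (_ : 2 * (sig2 p / (N * d ^+ 2)) < _).
    by rewrite ler_wpM2l // mass_Ty.
  have q0 : 0 < d ^+ 2 * eps by rewrite mulr_gt0 // exprn_gt0.
  move: h2; rewrite ltr_pdivrMr // => h2.
  rewrite mulrA ltr_pdivrMr ?mulr_gt0 ?exprn_gt0 //.
  have -> : eps * (N * d ^+ 2) = n%:R * (d ^+ 2 * eps) + d ^+ 2 * eps.
    by rewrite nN; ring.
  lra.
rewrite /rate; apply: le_trans (ereal_inf_lbound hS) _.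
rewrite lee_fin ler_pdivrMr //.
move: h1; rewrite ltr_pdivrMr // => h1.
have e1 : m.+1%:R = m%:R + 1 :> R by rewrite natr1.
rewrite e1.
have -> : ((H + 1) / 2 + d) * N = (N * H + N) / 2 + N * d by ring.
move: mX2; rewrite /X nN => mX2.
have : n%:R * d + d = N * d by rewrite nN; ring.
rewrite nN.
nra.
Unshelve. all: by end_near.
Qed.

Lemma rate_lb eps d : 0 < eps -> eps < 1 -> 0 < d ->
  \forall n \near \oo, (((shannon p + 1) / 2 - d)%:E <= rate p n eps)%E.
Proof.
move=> e0 e1 d0.
set c0 : R := (1 - eps) / 2.
have c00 : 0 < c0 by rewrite /c0 divr_gt0 // subr_gt0.
near=> n.
have h1 : - log2 c0 / d < n%:R by near: n; apply: nbhs_infty_gtr.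
have h2 : sig2 p / (d ^+ 2 * c0) < n%:R by near: n; apply: nbhs_infty_gtr.
apply: le_ereal_inf_tmp => _ [m hm <-].
set N : R := n.+1%:R.
have N0 : 0 < N by rewrite ltr0n.
have nN : n%:R = N - 1 by rewrite /N -natr1 addrK.
set H := shannon p.
have := converse p0 p1 (T := Ty n p d) (c := e2 (- (N * (H - d))))
  (ltW (e2_gt0 _)) (fun i hi => Ty_ub p0 hi) hm.
have -> : #|LabN 2 m|%:R = e2 (m.+1 + m)%:R :> R.
  by rewrite e2_nat /LabN card_prod !card_ffun !card_ord card_bool natrM !natrX exprD.
have -> : (2^-1) ^+ n = e2 (- n%:R) :> R by rewrite e2N e2_nat exprVn.
rewrite -!e2D => hc.
have hmass : \sum_(i | i \notin Ty n p d) Pr p i < c0.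
  apply: le_lt_trans (mass_Ty n p0 p1 d0) _.
  have q0 : 0 < d ^+ 2 * c0 by rewrite mulr_gt0 // exprn_gt0.
  move: h2; rewrite ltr_pdivrMr // => h2.
  rewrite ltr_pdivrMr ?mulr_gt0 ?exprn_gt0 //.
  have -> : c0 * (N * d ^+ 2) = n%:R * (d ^+ 2 * c0) + d ^+ 2 * c0.
    by rewrite nN; ring.
  lra.
have hY : e2 (log2 c0) < e2 (- (N * (H - d)) + - n%:R + (m.+1 + m)%:R).
  rewrite e2_log2 //; have : c0 = (1 - eps) / 2 by []. lra.
move/e2_lt: hY.
rewrite natrD -natr1 => hY.
rewrite lee_fin ler_pdivlMr // -natr1.
move: h1; rewrite ltr_pdivrMr // => h1.
have -> : ((H + 1) / 2 - d) * N = (N * H + N) / 2 - N * d by ring.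
have : n%:R * d + d = N * d by rewrite nN; ring.
have : N * (H - d) = N * H - N * d by ring.
move: hY; rewrite nN.
nra.
Unshelve. all: by end_near.
Qed.

Lemma limsup_eq eps : 0 < eps -> eps < 1 ->
  limsup_rate p eps = ((shannon p + 1) / 2)%:E.
Proof.
move=> e0 e1; rewrite /limsup_rate limn_esup_lim.
apply/le_anti/andP; split.
  apply/lee_addgt0Pr => d d0.
  have [N0 _ HN0] := rate_ub e0 d0.
  apply: lime_le; first exact: is_cvg_esups.
  near=> n; apply: ge_ereal_sup => _ [k /= nk <-].
  rewrite -EFinD; apply: HN0 => /=; apply: leq_trans nk.
  by near: n; exists N0.
apply/lee_subgt0Pr => d d0.
have [N0 _ HN0] := rate_lb e0 e1 d0.
apply: lime_ge; first exact: is_cvg_esups.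
near=> n; apply: le_trans (_ : (rate p n eps <= _)%E).
  rewrite -EFinB; apply: HN0 => /=.
  by near: n; exists N0.
by apply: ereal_sup_ubound; exists n => /=.
Unshelve. all: by end_near.
Qed.

End Asym.

(* I(rho) = lim_{eps -> 0+} limsup_{N -> oo} R_{N,eps}(rho) = (H(p) + 1) / 2 *)
Theorem theorem1 (R : realType) (D : nat) (p : 'I_D -> R) :
  (1 < D)%N ->
  (forall i, 0 <= p i) -> \sum_(i < D) p i = 1 ->
  limsup_rate p eps @[eps --> 0^'+] --> ((shannon p + 1) / 2)%:E.
Proof.
move=> D1 p0 p1.
apply: cvg_near_cst.
near=> eps.
apply: (limsup_eq p0 p1 D1).
  by near: eps; apply: nbhs_right_gt.
by near: eps; apply: nbhs_right_lt; rewrite ltr01.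
Unshelve. all: by end_near.
Qed.
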